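(* Fix $\eta>0$. Let $\mu^*\in\arg\min_{\mu\in\mathbb{L}_2}\langle C,\mu\rangle$, let $\lambda\in\mathbb{R}^{2md}$, let $\hat\mu=\mathrm{Proj}(\mu^\lambda)\in\mathbb{L}_2$, and let $\delta=\max_{e\in E,i\in e}\|\nu^\lambda_{e,i}\|_1$. Then $$\langle C,\hat\mu-\mu^*\rangle\le16(m+n)d\|C\|_\infty\delta+4\|C\|_\infty\sum_{e\in E,i\in e}\|\nu^\lambda_{e,i}\|_1+\frac{n\log d+2m\log d}{\eta}.$$
   Context: Let $G=(V,E)$ be a finite undirected graph with $n=|V|$, $m=|E|$, every vertex incident to at least one edge; $N_i=\{e\in E:i\in e\}$. $\chi$ is a finite label set with $d=|\chi|\ge2$. Costs $C_i\in\mathbb{R}^\chi$, $C_e\in\mathbb{R}^{\chi^2}$; $\|C\|_\infty$ is the largest absolute entry; for $e=\{i,j\}$ (with fixed orientation), $x_e=(x_i,x_j)$, $(x_e)_i=x_i$. $\langle C,\mu\rangle=\sum_i\sum_xC_i(x)\mu_i(x)+\sum_e\sum_{x_e}C_e(x_e)\mu_e(x_e)$. $\mathbb{L}_2=\{\mu\ge0:\mu_i\in\Sigma^d\ \forall i,\ \sum_{x_e:(x_e)_i=x}\mu_e(x_e)=\mu_i(x)\ \forall e,\,i\in e,\,x\}$, $\Sigma^d$ the probability simplex on $\chi$. For $\lambda\in\mathbb{R}^{2md}$ (indexed by $(e,i,x)$): $\mu^\lambda_i(x)\propto\exp(-\eta C_i(x)+\eta\sum_{e\in N_i}\lambda_{e,i}(x))$,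 $\mu^\lambda_e(x_e)\propto\exp(-\eta C_e(x_e)-\eta\sum_{i\in e}\lambda_{e,i}((x_e)_i))$, each normalized; $S^\lambda_{e,i}(x)=\sum_{x_e:(x_e)_i=x}\mu^\lambda_e(x_e)$; slack $\nu^\lambda_{e,i}=S^\lambda_{e,i}-\mu^\lambda_i$. Rounding map: for $F\in\mathbb{R}_{>0}^{\chi\times\chi}$ and $r,c\in\Sigma^d$, with $r(F),c(F)$ the row/column sums, let $F'=\mathrm{diag}(a)F$ with $a(x)=\min\{r(x)/r(F)(x),1\}$, $F''=F'\mathrm{diag}(b)$ with $b(x)=\min\{c(x)/c(F')(x),1\}$, $\mathrm{err}_r=r-r(F'')$, $\mathrm{err}_c=c-c(F'')$, output $F''+\mathrm{err}_r\mathrm{err}_c^\top/\|\mathrm{err}_c\|_1$ (or $F''$ if $\mathrm{err}_c=0$). $\mathrm{Proj}(\mu^\lambda)$: $\hat\mu_i=\mu^\lambda_i$, and for $e=\{i,j\}$, $\hat\mu_e$ is the rounding of $\mu^\lambda_e$ (rows indexed by $x_i$, columns by $x_j$) with $r=\mu^\lambda_i$, $c=\mu^\lambda_j$. *)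

(* Defs.v *)
From HB Require Import structures.
From mathcomp Require Import all_boot all_order all_algebra.
From mathcomp Require Import reals.
From mathcomp Require Import sequences exp.
Set Implicit Arguments. Unset Strict Implicit. Unset Printing Implicit Defensive.
Import Order.TTheory GRing.Theory Num.Theory.
Local Open Scope ring_scope.

Section MRF.
Variables (R : realType) (V E X : finType) (src dst : E -> V).

Definition incident (e : E) (i : V) : bool := (src e == i) || (dst e == i).

Definition simple_graph_cover : Prop :=
  (forall e, src e != dst e) /\
  (forall e e', (src e = src e' /\ dst e = dst e') \/
                (src e = dst e' /\ dst e = src e') -> e = e') /\
  (forall i, exists e, incident e i).

(* <C, mu> ; edge entries indexed (x_src, x_dst) *)
Definition cost (Cv : V -> X -> R) (Ce : E -> X -> X -> R)
  (mv : V -> X -> R) (me : E -> X -> X -> R) : R :=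
  \sum_i \sum_x Cv i x * mv i x + \sum_e \sum_x \sum_y Ce e x y * me e x y.

Definition in_L2 (mv : V -> X -> R) (me : E -> X -> X -> R) : Prop :=
  (forall i x, 0 <= mv i x) /\ (forall e x y, 0 <= me e x y) /\
  (forall i, \sum_x mv i x = 1) /\
  (forall e x, \sum_y me e x y = mv (src e) x) /\
  (forall e y, \sum_x me e x y = mv (dst e) y).

Definition Cinf (Cv : V -> X -> R) (Ce : E -> X -> X -> R) : R :=
  Num.max (\big[Num.max/0]_(i : V) \big[Num.max/0]_(x : X) `|Cv i x|)
          (\big[Num.max/0]_(e : E) \big[Num.max/0]_(x : X)
              \big[Num.max/0]_(y : X) `|Ce e x y|).

(* mu^lambda ; lambda indexed by (e, i, x), only i ∈ e is used *)
Definition mulam_v (eta : R) (Cv : V -> X -> R) (lam : E -> V -> X -> R)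
  (i : V) (x : X) : R :=
  let w := fun x' => expR (- eta * Cv i x' + eta * \sum_(e | incident e i) lam e i x') in
  w x / \sum_x' w x'.

Definition mulam_e (eta : R) (Ce : E -> X -> X -> R) (lam : E -> V -> X -> R)
  (e : E) (x y : X) : R :=
  let w := fun x' y' => expR (- eta * Ce e x' y'
                               - eta * (lam e (src e) x' + lam e (dst e) y')) in
  w x y / \sum_x' \sum_y' w x' y'.

Definition edge_marg (me : E -> X -> X -> R) (e : E) (i : V) (x : X) : R :=
  if src e == i then \sum_y me e x y else \sum_y me e y x.

Definition slack_l1 (mv : V -> X -> R) (me : E -> X -> X -> R) (e : E) (i : V) : R :=
  \sum_x `|edge_marg me e i x - mv i x|.

(* rounding map of F (rows x, columns y) onto marginals r, c *)
Definition round (F : X -> X -> R) (r c : X -> R) : X -> X -> R :=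
  let a := fun x => Num.min (r x / \sum_y F x y) 1 in
  let F1 := fun x y => a x * F x y in
  let b := fun y => Num.min (c y / \sum_x F1 x y) 1 in
  let F2 := fun x y => F1 x y * b y in
  let err_r := fun x => r x - \sum_y F2 x y in
  let err_c := fun y => c y - \sum_x F2 x y in
  let nc := \sum_y `|err_c y| in
  fun x y => if nc == 0 then F2 x y else F2 x y + err_r x * err_c y / nc.

(* Proj(mu): vertex part unchanged, edge part rounded *)
Definition proj_e (mv : V -> X -> R) (me : E -> X -> X -> R) (e : E) : X -> X -> R :=
  round (me e) (mv (src e)) (mv (dst e)).

End MRF.

(* Main.v *)
Require Import Defs.
From HB Require Import structures.
From mathcomp Require Import all_boot all_order all_algebra.
From mathcomp Require Import reals.
From mathcomp Require Import sequences exp.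
From mathcomp Require Import lra ring.
Import Order.TTheory GRing.Theory Num.Theory.
Set Implicit Arguments. Unset Strict Implicit. Unset Printing Implicit Defensive.
Local Open Scope ring_scope.
Lemma Cinf_v (R : realType) (V E X : finType) (Cv : V -> X -> R) (Ce : E -> X -> X -> R) i x :
  `|Cv i x| <= Cinf Cv Ce.
Proof.
rewrite /Cinf le_max; apply/orP; left.
apply: le_trans (le_bigmax _ _ i); exact: le_bigmax.
Qed.

Lemma Cinf_e (R : realType) (V E X : finType) (Cv : V -> X -> R) (Ce : E -> X -> X -> R) e x y :
  `|Ce e x y| <= Cinf Cv Ce.
Proof.
rewrite /Cinf le_max; apply/orP; right.
apply: le_trans (le_bigmax _ _ e); apply: le_trans (le_bigmax _ _ x); exact: le_bigmax.
Qed.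

Lemma Cinf_ge0 (R : realType) (V E X : finType) (Cv : V -> X -> R) (Ce : E -> X -> X -> R) :
  0 <= Cinf Cv Ce.
Proof. by rewrite /Cinf le_max bigmax_ge_id. Qed.

Lemma cost_diff (R : realType) (V E X : finType) (Cv : V -> X -> R) (Ce : E -> X -> X -> R)
  av ae bv be :
  cost Cv Ce av ae - cost Cv Ce bv be <=
  Cinf Cv Ce * (\sum_i \sum_x `|av i x - bv i x| + \sum_e \sum_x \sum_y `|ae e x y - be e x y|).
Proof.
rewrite /cost opprD addrACA -!sumrB mulrDr !mulr_sumr.
apply: lerD; apply: ler_sum => i _; rewrite -sumrB mulr_sumr; apply: ler_sum => x _.
  rewrite -mulrBr; apply: le_trans (ler_norm _) _; rewrite normrM.
  by apply: ler_wpM2r => //; apply: Cinf_v.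
rewrite -sumrB mulr_sumr; apply: ler_sum => y _.
rewrite -mulrBr; apply: le_trans (ler_norm _) _; rewrite normrM.
by apply: ler_wpM2r => //; apply: Cinf_e.
Qed.
Lemma ln_le_sub1 {R : realType} (y : R) : 0 < y -> ln y <= y - 1.
Proof.
move=> y0; have := expR_ge1Dx (ln y); rewrite lnK ?posrE // => h.
by rewrite lerBrDl.
Qed.

Lemma gibbs (R : realType) (T : finType) (eta : R) (a q : T -> R) :
  0 < eta -> (0 < #|T|)%N -> (forall t, 0 <= q t) -> \sum_t q t = 1 ->
  \sum_t a t * (expR (- eta * a t) / \sum_t' expR (- eta * a t'))
   <= \sum_t a t * q t + ln (#|T|%:R) / eta.
Proof.
move=> eta0 T0 q0 q1.
set w := fun t => expR (- eta * a t).
set Z := \sum_t' w t'.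
have w0 t : 0 < w t by apply: expR_gt0.
have [t0 _] : exists t0 : T, true.
  by move/card_gt0P: T0 => [t0 _]; exists t0.
have Z0 : 0 < Z.
  rewrite /Z (bigD1 t0) //=; apply: ltr_wpDr; first by apply: sumr_ge0 => t _; apply: ltW.
  exact: w0.
have wZ t : w t <= Z.
  rewrite /Z (bigD1 t) //= lerDl; by apply: sumr_ge0 => t' _; apply: ltW.
set p := fun t => w t / Z.
have p0 t : 0 < p t by apply: divr_gt0.
have p1 : \sum_t p t = 1.
  by rewrite /p -mulr_suml mulfV // gt_eqF.
have ha t : a t = - ln (w t) / eta.
  rewrite /w expRK; field; by rewrite gt_eqF.
have lnw t : ln (w t) = ln (p t) + ln Z.
  rewrite -lnM ?posrE //; congr ln; rewrite /p mulrVK //; by rewrite unitfE gt_eqF.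
set N : R := #|T|%:R.
have N0 : 0 < N by rewrite ltr0n.
have H : - \sum_t p t * ln (p t) <= ln N.
  suff: 0 <= \sum_t p t * ln (p t) + ln N by lra.
  have -> : \sum_t p t * ln (p t) + ln N = - \sum_t p t * ln ((N * p t)^-1).
    rewrite -sumrN.
    have -> : ln N = \sum_t p t * ln N by rewrite -mulr_suml p1 mul1r.
    rewrite -big_split /=; apply: eq_bigr => t _.
    have hNp : 0 < N * p t by rewrite mulr_gt0.
    rewrite lnV ?posrE // lnM ?posrE //; lra.
  rewrite oppr_ge0.
  apply: le_trans (_ : \sum_t (N^-1 - p t) <= 0).
    apply: ler_sum => t _.
    have hy : 0 < (N * p t)^-1 by rewrite invr_gt0 mulr_gt0.
    apply: le_trans (ler_wpM2l (ltW (p0 t)) (ln_le_sub1 hy)) _.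
    rewrite mulrBr mulr1 invfM mulrCA mulfV ?mulr1 //; by rewrite gt_eqF.
  rewrite sumrB p1 sumr_const -mulr_natr.
  have -> : N^-1 * #|T|%:R = 1 :> R by change (N^-1 * N = 1); rewrite mulVf // gt_eqF.
  by rewrite subrr.
have Eq : \sum_t a t * q t >= - ln Z / eta.
  have -> : - ln Z / eta = \sum_t (- ln Z / eta) * q t by rewrite -mulr_sumr q1 mulr1.
  apply: ler_sum => t _; rewrite ha; apply: ler_wpM2r => //.
  rewrite ler_pM2r ?invr_gt0 // lerN2 ler_ln ?posrE //.
have Ep : \sum_t a t * p t = (- \sum_t p t * ln (p t) - ln Z) / eta.
  have -> : - \sum_t p t * ln (p t) - ln Z = \sum_t - (p t * ln (w t)).
    rewrite sumrN -opprD; congr (- _).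
    have -> : ln Z = \sum_t p t * ln Z by rewrite -mulr_suml p1 mul1r.
    rewrite -big_split /=; apply: eq_bigr => t _; rewrite lnw; lra.
  rewrite mulr_suml; apply: eq_bigr => t _; rewrite ha; lra.
rewrite -/p Ep.
apply: le_trans (_ : (ln N - ln Z) / eta <= _).
  by rewrite ler_pM2r ?invr_gt0 // lerD2r.
rewrite mulrBl addrC lerD2r -mulNr; exact: Eq.
Qed.
Lemma round_l1 (R : realType) (X : finType) (F : X -> X -> R) (r c : X -> R) :
  (forall x y, 0 < F x y) -> (forall x, 0 <= r x) -> (forall y, 0 <= c y) ->
  \sum_x \sum_y `|round F r c x y - F x y|
   <= 3 * \sum_x `|\sum_y F x y - r x| + 2 * \sum_y `|\sum_x F x y - c y|.
Proof.
move=> F0 r0 c0.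
pose a := fun x => Num.min (r x / \sum_y F x y) 1.
pose F1 := fun x y => a x * F x y.
pose b := fun y => Num.min (c y / \sum_x F1 x y) 1.
pose F2 := fun x y => F1 x y * b y.
pose er := fun x => r x - \sum_y F2 x y.
pose ec := fun y => c y - \sum_x F2 x y.
pose nc := \sum_y `|ec y|.
have Hround : round F r c = fun x y => if nc == 0 then F2 x y else F2 x y + er x * ec y / nc by [].
set al := \sum_x `|\sum_y F x y - r x|.
set be := \sum_y `|\sum_x F x y - c y|.
have rF0 x : 0 < \sum_y F x y.
  rewrite (bigD1 x) //=; apply: ltr_wpDr; last exact: F0.
  by apply: sumr_ge0 => y _; apply: ltW.
have a0 x : 0 <= a x by rewrite /a le_min ler01 andbT divr_ge0 // ltW.
have a1 x : a x <= 1 by rewrite /a ge_min lexx orbT.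
have F10 x y : 0 <= F1 x y by rewrite /F1 mulr_ge0 // ltW.
have cF10 y : 0 <= \sum_x F1 x y by apply: sumr_ge0.
have b0 y : 0 <= b y by rewrite /b le_min ler01 andbT divr_ge0.
have b1 y : b y <= 1 by rewrite /b ge_min lexx orbT.
have D1 : \sum_x \sum_y `|F x y - F1 x y| <= al.
  apply: ler_sum => x _.
  have -> : \sum_y `|F x y - F1 x y| = (1 - a x) * \sum_y F x y.
    rewrite mulr_sumr; apply: eq_bigr => y _.
    rewrite /F1 ger0_norm; first ring.
    by rewrite -{1}(mul1r (F x y)) -mulrBl mulr_ge0 ?subr_ge0 // ltW.
  rewrite /a; case: (leP (r x / \sum_y F x y) 1) => h.
    rewrite mulrBl mul1r mulfVK ?gt_eqF //.
    by apply: le_trans (ler_norm _).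
  by rewrite subrr mul0r.
have D2 : \sum_x \sum_y `|F1 x y - F2 x y| <= be.
  rewrite exchange_big /=; apply: ler_sum => y _.
  have -> : \sum_x `|F1 x y - F2 x y| = (1 - b y) * \sum_x F1 x y.
    rewrite mulr_sumr; apply: eq_bigr => x _.
    rewrite /F2 ger0_norm; first ring.
    by rewrite -{1}(mulr1 (F1 x y)) -mulrBr mulr_ge0 ?subr_ge0.
  have cle : \sum_x F1 x y <= \sum_x F x y.
    apply: ler_sum => x _; rewrite /F1 ler_piMl // ltW //.
  rewrite /b; case: (leP (c y / \sum_x F1 x y) 1) => h.
    have [->|nz] := eqVneq (\sum_x F1 x y) 0; first by rewrite mulr0.
    rewrite mulrBl mul1r mulfVK //.
    apply: le_trans (ler_norm _); by rewrite lerD2r.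
  by rewrite subrr mul0r.
have D12 : \sum_x \sum_y `|F2 x y - F x y| <= al + be.
  apply: le_trans (_ : \sum_x \sum_y (`|F x y - F1 x y| + `|F1 x y - F2 x y|) <= _).
    apply: ler_sum => x _; apply: ler_sum => y _.
    rewrite distrC; apply: le_trans (ler_normD _ _); rewrite le_eqVlt; apply/orP; left; apply/eqP.
    congr `|_|; ring.
  under eq_bigr do rewrite big_split /=.
  rewrite big_split /=; exact: lerD.
have Er : \sum_x `|er x| <= al + (al + be).
  apply: le_trans (_ : \sum_x (`|\sum_y F x y - r x| + \sum_y `|F2 x y - F x y|) <= _).
    apply: ler_sum => x _.
    have -> : er x = - (\sum_y F x y - r x) - \sum_y (F2 x y - F x y).
      rewrite /er sumrB; ring.
    apply: le_trans (ler_normB _ _) _; rewrite normrN lerD2l.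
    exact: ler_norm_sum.
  rewrite big_split /=; exact: lerD.
rewrite Hround /=.
have al0 : 0 <= al by apply: sumr_ge0.
have be0 : 0 <= be by apply: sumr_ge0.
have [nc0|nc0] := eqVneq nc 0.
  apply: le_trans D12 _; lra.
apply: le_trans (_ : \sum_x \sum_y (`|F2 x y - F x y| + `|er x * ec y / nc|) <= _).
  apply: ler_sum => x _; apply: ler_sum => y _.
  rewrite addrAC; exact: ler_normD.
under eq_bigr do rewrite big_split /=.
rewrite big_split /=.
have -> : \sum_x \sum_y `|er x * ec y / nc| = \sum_x `|er x|.
  apply: eq_bigr => x _.
  under eq_bigr do rewrite !normrM.
  rewrite -mulr_suml -mulr_sumr.
  have ncp : `|nc^-1| = nc^-1.
    rewrite ger0_norm // invr_ge0 sumr_ge0 //.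
  rewrite ncp -mulrA; change (`|er x| * (nc / nc) = `|er x|); by rewrite mulfV // mulr1.
lra.
Qed.
Lemma sum_incident (R : realType) (V E : finType) (src dst : E -> V) (f : E -> V -> R) :
  (forall e, src e != dst e) ->
  \sum_i \sum_(e | incident src dst e i) f e i = \sum_e (f e (src e) + f e (dst e)).
Proof.
move=> Hsd.
under eq_bigr do rewrite big_mkcond /=.
rewrite exchange_big /=; apply: eq_bigr => e _.
rewrite (bigD1 (src e)) //= /incident eqxx /=.
rewrite (bigD1 (dst e)) /=; last by rewrite eq_sym (Hsd e).
rewrite eqxx orbT.
rewrite big1 ?addr0 // => i /andP [hi1 hi2].
by rewrite eq_sym (negPf hi1) eq_sym (negPf hi2).
Qed.

Definition cv' (R : realType) (V E X : finType) (src dst : E -> V) (Cv : V -> X -> R)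
  (lam : E -> V -> X -> R) i x := Cv i x - \sum_(e | incident src dst e i) lam e i x.
Definition ce' (R : realType) (V E X : finType) (src dst : E -> V) (Ce : E -> X -> X -> R)
  (lam : E -> V -> X -> R) e x y := Ce e x y + lam e (src e) x + lam e (dst e) y.

Definition Lg (R : realType) (V E X : finType) (src dst : E -> V) (lam : E -> V -> X -> R)
  (qv : V -> X -> R) (qe : E -> X -> X -> R) :=
  \sum_e (\sum_x lam e (src e) x * (\sum_y qe e x y - qv (src e) x)
        + \sum_y lam e (dst e) y * (\sum_x qe e x y - qv (dst e) y)).

Lemma Lid (R : realType) (V E X : finType) (src dst : E -> V)
  (Cv : V -> X -> R) (Ce : E -> X -> X -> R) (lam : E -> V -> X -> R) (qv : V -> X -> R) (qe : E -> X -> X -> R) :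
  (forall e, src e != dst e) ->
  \sum_i \sum_x cv' src dst Cv lam i x * qv i x
  + \sum_e \sum_x \sum_y ce' src dst Ce lam e x y * qe e x y
  = cost Cv Ce qv qe + Lg src dst lam qv qe.
Proof.
move=> Hsd.
have A : \sum_i \sum_x cv' src dst Cv lam i x * qv i x
   = \sum_i \sum_x Cv i x * qv i x
     - \sum_e (\sum_x lam e (src e) x * qv (src e) x + \sum_x lam e (dst e) x * qv (dst e) x).
  rewrite -(sum_incident (fun e i => \sum_x lam e i x * qv i x) Hsd) -sumrB.
  apply: eq_bigr => i _.
  rewrite exchange_big /= -sumrB; apply: eq_bigr => x _.
  rewrite /cv' mulrBl mulr_suml //.
have B : \sum_e \sum_x \sum_y ce' src dst Ce lam e x y * qe e x y
   = \sum_e \sum_x \sum_y Ce e x y * qe e x y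
     + \sum_e (\sum_x lam e (src e) x * \sum_y qe e x y + \sum_y lam e (dst e) y * \sum_x qe e x y).
  rewrite -big_split /=; apply: eq_bigr => e _.
  have -> : \sum_x \sum_y ce' src dst Ce lam e x y * qe e x y =
     \sum_x \sum_y Ce e x y * qe e x y + \sum_x \sum_y lam e (src e) x * qe e x y
     + \sum_x \sum_y lam e (dst e) y * qe e x y.
    rewrite -!big_split; apply: eq_bigr => x _; rewrite -!big_split; apply: eq_bigr => y _.
    by rewrite /ce' /= !mulrDl.
  rewrite -addrA; congr (_ + (_ + _)).
    by apply: eq_bigr => x _; rewrite mulr_sumr.
  by rewrite exchange_big; apply: eq_bigr => y _; rewrite mulr_sumr.
rewrite A B /cost /Lg.
have C : \sum_e (\sum_x lam e (src e) x * (\sum_y qe e x y - qv (src e) x)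
        + \sum_y lam e (dst e) y * (\sum_x qe e x y - qv (dst e) y))
   = \sum_e (\sum_x lam e (src e) x * \sum_y qe e x y + \sum_y lam e (dst e) y * \sum_x qe e x y)
     - \sum_e (\sum_x lam e (src e) x * qv (src e) x + \sum_x lam e (dst e) x * qv (dst e) x).
  rewrite -sumrB; apply: eq_bigr => e _.
  rewrite (eq_bigr (fun x => lam e (src e) x * \sum_y qe e x y - lam e (src e) x * qv (src e) x));
    last by move=> x _; rewrite mulrBr.
  rewrite [X in _ + X = _](eq_bigr (fun y => lam e (dst e) y * \sum_x qe e x y - lam e (dst e) y * qv (dst e) y));
    last by move=> y _; rewrite mulrBr.
  rewrite !sumrB; ring.
rewrite C; ring.
Qed.

Lemma gibbs2 (R : realType) (T : finType) (eta : R) (a q : T -> T -> R) :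
  0 < eta -> (0 < #|T|)%N -> (forall x y, 0 <= q x y) -> \sum_x \sum_y q x y = 1 ->
  \sum_x \sum_y a x y * (expR (- eta * a x y) / \sum_x' \sum_y' expR (- eta * a x' y'))
   <= \sum_x \sum_y a x y * q x y + 2 * ln (#|T|%:R) / eta.
Proof.
move=> eta0 T0 q0 q1.
have T00 : (0 < #|T| * #|T|)%N by rewrite muln_gt0 T0.
have := @gibbs R (T * T)%type eta (fun p => a p.1 p.2) (fun p => q p.1 p.2) eta0.
rewrite card_prod => /(_ T00 (fun p => q0 p.1 p.2)).
rewrite -(pair_bigA _ (fun x y => q x y)) q1 => /(_ erefl).
rewrite natrM lnM ?posrE ?ltr0n // => h.
rewrite !pair_bigA.
apply: (le_trans h); rewrite lerD2l.
by rewrite le_eqVlt; apply/orP; left; apply/eqP; congr (_ / _); ring.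
Qed.

Unset Implicit Arguments. Set Strict Implicit.

Lemma le_sum1 (R : realType) (T : finType) (F : T -> R) j :
  (forall i, 0 <= F i) -> F j <= \sum_i F i.
Proof.
move=> F0; rewrite (bigD1 j) //= lerDl; by apply: sumr_ge0.
Qed.

Lemma pos_sum (R : realType) (T : finType) (F : T -> R) (j : T) :
  (forall i, 0 < F i) -> 0 < \sum_i F i.
Proof.
move=> F0; apply: (lt_le_trans (F0 j)); apply: le_sum1 => i; exact/ltW.
Qed.

Lemma sum_cst (R : realType) (T : finType) (c : R) : \sum_(i : T) c = c * #|T|%:R.
Proof. by rewrite sumr_const mulr_natr. Qed.

Theorem proposition4 (R : realType) (V E X : finType) (src dst : E -> V)
  (Cv : V -> X -> R) (Ce : E -> X -> X -> R) (eta : R)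
  (msv : V -> X -> R) (mse : E -> X -> X -> R) (lam : E -> V -> X -> R) :
  simple_graph_cover src dst ->
  (2 <= #|X|)%N ->
  0 < eta ->
  in_L2 src dst msv mse ->
  (forall mv me, in_L2 src dst mv me ->
     cost Cv Ce msv mse <= cost Cv Ce mv me) ->
  let n : R := #|V|%:R in
  let m : R := #|E|%:R in
  let d : R := #|X|%:R in
  let mv := mulam_v src dst eta Cv lam in
  let me := mulam_e src dst eta Ce lam in
  let hat_e := proj_e src dst mv me in
  let delta := \big[Num.max/0]_(e : E)
                 Num.max (slack_l1 src mv me e (src e)) (slack_l1 src mv me e (dst e)) in
  let sum_slack := \sum_(e : E) (slack_l1 src mv me e (src e) + slack_l1 src mv me e (dst e)) in
  let Cn := Cinf Cv Ce in
  cost Cv Ce mv hat_e - cost Cv Ce msv mse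
    <= 16 * (m + n) * d * Cn * delta + 4 * Cn * sum_slack
       + (n * ln d + 2 * m * ln d) / eta.
Proof.
move=> [Hsd [_ _]] Hd eta0 [msv0 [mse0 [msv1 [mser msec]]]] _.
cbv zeta.
set n : R := #|V|%:R.
set m : R := #|E|%:R.
set d : R := #|X|%:R.
set mv := mulam_v src dst eta Cv lam.
set me := mulam_e src dst eta Ce lam.
set hat_e := proj_e src dst mv me.
set delta := \big[Num.max/0]_(e : E) _.
set sum_slack := \sum_(e : E) _.
set Cn := Cinf Cv Ce.
have X0 : (0 < #|X|)%N by apply: leq_trans Hd.
have [x0 _] : exists x0 : X, true.
  by move/card_gt0P: X0 => [x0 _]; exists x0.
have d0 : 0 < d by rewrite /d ltr0n.
have lnd0 : 0 <= ln d by rewrite ln_ge0 // /d (ler_nat R 1).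
have n0 : 0 <= n by rewrite /n ler0n.
have m0 : 0 <= m by rewrite /m ler0n.
have Cn0 : 0 <= Cn by apply: Cinf_ge0.
have mvE i x : mv i x = expR (- eta * cv' src dst Cv lam i x) /
                        \sum_x' expR (- eta * cv' src dst Cv lam i x').
  rewrite /mv /mulam_v /cv'; congr (expR _ / _); first ring.
  by apply: eq_bigr => x' _; congr expR; ring.
have meE e x y : me e x y = expR (- eta * ce' src dst Ce lam e x y) /
                        \sum_x' \sum_y' expR (- eta * ce' src dst Ce lam e x' y').
  rewrite /me /mulam_e /ce'; congr (expR _ / _); first ring.
  by apply: eq_bigr => x' _; apply: eq_bigr => y' _; congr expR; ring.
have mv0 i x : 0 < mv i x.
  rewrite mvE divr_gt0 ?expR_gt0 //.
  by apply: (@pos_sum _ _ _ x0) => ?; apply: expR_gt0.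
have me0 e x y : 0 < me e x y.
  rewrite meE divr_gt0 ?expR_gt0 //.
  by apply: (@pos_sum _ _ _ x0) => ?; apply: (@pos_sum _ _ _ x0) => ?; apply: expR_gt0.
have mv1 i : \sum_x mv i x = 1.
  under eq_bigr do rewrite mvE.
  rewrite -mulr_suml mulfV // gt_eqF //.
  by apply: (@pos_sum _ _ _ x0) => ?; apply: expR_gt0.
have me1 e : \sum_x \sum_y me e x y = 1.
  under eq_bigr do under eq_bigr do rewrite meE.
  under eq_bigr do rewrite -mulr_suml.
  rewrite -mulr_suml mulfV // gt_eqF //.
  by apply: (@pos_sum _ _ _ x0) => ?; apply: (@pos_sum _ _ _ x0) => ?; apply: expR_gt0.
pose ns := fun e x => \sum_y me e x y - mv (src e) x.
pose nd := fun e y => \sum_x me e x y - mv (dst e) y.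
have sls e : slack_l1 src mv me e (src e) = \sum_x `|ns e x|.
  by rewrite /slack_l1 /edge_marg eqxx.
have sld e : slack_l1 src mv me e (dst e) = \sum_y `|nd e y|.
  by rewrite /slack_l1 /edge_marg (negPf (Hsd e)).
have del0 : 0 <= delta by apply: bigmax_ge_id.
have dels e x : `|ns e x| <= delta.
  apply: (le_trans (@le_sum1 _ _ (fun x => `|ns e x|) x (fun _ => normr_ge0 _))).
  rewrite -sls /delta (bigD1 e) //= le_max; apply/orP; left; by rewrite le_max lexx.
have deld e x : `|nd e x| <= delta.
  apply: (le_trans (@le_sum1 _ _ (fun x => `|nd e x|) x (fun _ => normr_ge0 _))).
  rewrite -sld /delta (bigD1 e) //= le_max; apply/orP; left; by rewrite le_max lexx orbT.
have RND e : \sum_x \sum_y `|hat_e e x y - me e x y| <=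
     3 * \sum_x `|ns e x| + 2 * \sum_y `|nd e y|.
  have := @round_l1 _ _ (me e) (mv (src e)) (mv (dst e)) (me0 e)
     (fun x => ltW (mv0 _ x)) (fun x => ltW (mv0 _ x)).
  by [].
have T1 : cost Cv Ce mv hat_e - cost Cv Ce mv me <= 4 * Cn * sum_slack.
  apply: le_trans (cost_diff _ _ _ _ _ _) _.
  rewrite (eq_bigr (fun _ => 0)); last by move=> i _; apply: big1 => x _; rewrite subrr normr0.
  rewrite big1_eq add0r.
  apply: le_trans (_ : Cn * (4 * sum_slack) <= _); last by rewrite mulrA (mulrC Cn).
  rewrite ler_wpM2l //.
  rewrite /sum_slack mulr_sumr; apply: ler_sum => e _.
  rewrite sls sld; apply: le_trans (RND e) _.
  have : 0 <= \sum_x `|ns e x| by apply: sumr_ge0.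
  have : 0 <= \sum_y `|nd e y| by apply: sumr_ge0.
  lra.
have Hs0 : 0 <= sum_slack.
  by apply: sumr_ge0 => e _; rewrite sls sld addr_ge0 // sumr_ge0.
have lnt0 : 0 <= (n * ln d + 2 * m * ln d) / eta.
  apply: divr_ge0; last exact: ltW.
  have := mulr_ge0 n0 lnd0; have := mulr_ge0 m0 lnd0; lra.
have mse1 e : \sum_x \sum_y mse e x y = 1.
  by rewrite (eq_bigr (fun x => msv (src e) x)) ?msv1 // => x _; rewrite mser.
have [small|big] := leP (d * delta) 1; last first.
  have B : cost Cv Ce mv hat_e - cost Cv Ce msv mse <= Cn * (2 * n + 2 * m + 4 * sum_slack).
    apply: le_trans (cost_diff _ _ _ _ _ _) _; rewrite ler_wpM2l // -addrA.
    apply: lerD.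
      apply: le_trans (_ : \sum_(i : V) (2 : R) <= _); last by rewrite sum_cst.
      apply: ler_sum => i _.
      apply: le_trans (_ : \sum_x (mv i x + msv i x) <= _); last by rewrite big_split /= mv1 msv1.
      apply: ler_sum => x _; apply: le_trans (ler_normB _ _) _.
      by rewrite !ger0_norm // ltW.
    apply: le_trans (_ : \sum_(e : E) (2 + 4 * (slack_l1 src mv me e (src e) + slack_l1 src mv me e (dst e))) <= _).
      apply: ler_sum => e _.
      apply: le_trans (_ : \sum_x \sum_y (`|hat_e e x y - me e x y| + me e x y + mse e x y) <= _).
        apply: ler_sum => x _; apply: ler_sum => y _.
        have -> : hat_e e x y - mse e x y = (hat_e e x y - me e x y) + (me e x y - mse e x y) by ring.
        apply: le_trans (ler_normD _ _) _; rewrite -addrA lerD2l.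
        apply: le_trans (ler_normB _ _) _; by rewrite !ger0_norm // ltW.
      under eq_bigr do rewrite !big_split /=.
      rewrite !big_split /= me1 mse1 sls sld.
      have := RND e.
      have : 0 <= \sum_x `|ns e x| by apply: sumr_ge0.
      have : 0 <= \sum_y `|nd e y| by apply: sumr_ge0.
      lra.
    by rewrite big_split /= sum_cst -mulr_sumr mulrC.
  apply: le_trans B _.
  have h2 : 0 <= (m + n) * Cn by rewrite mulr_ge0 // addr_ge0.
  have h1 : (m + n) * Cn * 1 <= (m + n) * Cn * (d * delta).
    by rewrite ler_wpM2l // ltW.
  have -> : 16 * (m + n) * d * Cn * delta = 16 * ((m + n) * Cn * (d * delta)) by ring.
  lra.
set eps := d * delta.
have eps0 : 0 <= eps by rewrite mulr_ge0 // ltW.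
have nsb e x : - delta <= ns e x <= delta by rewrite -ler_norml.
have ndb e x : - delta <= nd e x <= delta by rewrite -ler_norml.
have nssum e : \sum_x ns e x = 0.
  by rewrite /ns sumrB me1 mv1 subrr.
have ndsum e : \sum_y nd e y = 0.
  by rewrite /nd sumrB exchange_big /= me1 mv1 subrr.
have zcase : eps = 0 -> delta = 0.
  by move/eqP; rewrite mulf_eq0 (gt_eqF d0) /= => /eqP.
have keyr e x : \sum_y (delta + ns e x) * (delta + nd e y) / eps = delta + ns e x.
  have [e0|en0] := eqVneq eps 0.
    have dl0 := zcase e0.
    have := nsb e x; rewrite dl0 oppr0 => hb.
    have -> : ns e x = 0 by apply/eqP; rewrite eq_le; lra.
    by rewrite e0 invr0 addr0 big1 // => y _; rewrite !mulr0.
  rewrite -mulr_suml -mulr_sumr big_split /= sum_cst ndsum addr0.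
  have -> : delta * #|X|%:R = eps by rewrite /eps mulrC.
  by rewrite mulfK.
have keyc e y : \sum_x (delta + ns e x) * (delta + nd e y) / eps = delta + nd e y.
  have [e0|en0] := eqVneq eps 0.
    have dl0 := zcase e0.
    have := ndb e y; rewrite dl0 oppr0 => hb.
    have -> : nd e y = 0 by apply/eqP; rewrite eq_le; lra.
    by rewrite e0 invr0 addr0 big1 // => x _; rewrite !mulr0.
  under eq_bigr do rewrite mulrAC.
  rewrite -mulr_suml -mulr_suml big_split /= sum_cst nssum addr0.
  have -> : delta * #|X|%:R = eps by rewrite /eps mulrC.
  by rewrite mulfV ?mul1r.
pose qv := fun i x => (1 - eps) * msv i x + delta.
pose qe := fun e x y => (1 - eps) * mse e x y + (delta + ns e x) * (delta + nd e y) / eps.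
have qv0 i x : 0 <= qv i x.
  by rewrite /qv addr_ge0 // mulr_ge0 // subr_ge0.
have qv1 i : \sum_x qv i x = 1.
  rewrite /qv big_split /= -mulr_sumr msv1 sum_cst /eps /d; ring.
have qe0 e x y : 0 <= qe e x y.
  rewrite /qe addr_ge0 // ?mulr_ge0 ?subr_ge0 //.
    by have := nsb e x; lra.
  by have := ndb e y; lra.
  by rewrite invr_ge0.
have qer e x : \sum_y qe e x y - qv (src e) x = ns e x.
  by rewrite /qe /qv big_split /= -mulr_sumr mser keyr; ring.
have qec e y : \sum_x qe e x y - qv (dst e) y = nd e y.
  by rewrite /qe /qv big_split /= -mulr_sumr msec keyc; ring.
have qe1 e : \sum_x \sum_y qe e x y = 1.
  rewrite (eq_bigr (fun x => qv (src e) x + ns e x)); last first.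
    by move=> x _; rewrite -(qer e x); ring.
  by rewrite big_split /= qv1 nssum addr0.
have G : cost Cv Ce mv me - cost Cv Ce qv qe <= (n * ln d + 2 * m * ln d) / eta.
  have L1 := Lid Cv Ce lam mv me Hsd.
  have L2 := Lid Cv Ce lam qv qe Hsd.
  have LgE : Lg src dst lam mv me = Lg src dst lam qv qe.
    rewrite /Lg; apply: eq_bigr => e _; congr (_ + _); apply: eq_bigr => x _; congr (_ * _).
      by rewrite qer.
    by rewrite qec.
  have GV : \sum_i \sum_x cv' src dst Cv lam i x * mv i x
      <= \sum_i \sum_x cv' src dst Cv lam i x * qv i x + ln d / eta * n.
    apply: le_trans (_ : \sum_i (\sum_x cv' src dst Cv lam i x * qv i x + ln d / eta) <= _);
      last by rewrite big_split /= sum_cst.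
    apply: ler_sum => i _.
    have -> : \sum_x cv' src dst Cv lam i x * mv i x = \sum_x cv' src dst Cv lam i x *
       (expR (- eta * cv' src dst Cv lam i x) / \sum_x' expR (- eta * cv' src dst Cv lam i x')).
      by apply: eq_bigr => x _; rewrite mvE.
    exact: gibbs.
  have GE : \sum_e \sum_x \sum_y ce' src dst Ce lam e x y * me e x y
      <= \sum_e \sum_x \sum_y ce' src dst Ce lam e x y * qe e x y + 2 * ln d / eta * m.
    apply: le_trans (_ : \sum_e (\sum_x \sum_y ce' src dst Ce lam e x y * qe e x y + 2 * ln d / eta) <= _);
      last by rewrite big_split /= sum_cst.
    apply: ler_sum => e _.
    have -> : \sum_x \sum_y ce' src dst Ce lam e x y * me e x y = \sum_x \sum_y ce' src dst Ce lam e x y *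
       (expR (- eta * ce' src dst Ce lam e x y) / \sum_x' \sum_y' expR (- eta * ce' src dst Ce lam e x' y')).
      by apply: eq_bigr => x _; apply: eq_bigr => y _; rewrite meE.
    exact: gibbs2.
  have -> : (n * ln d + 2 * m * ln d) / eta = ln d / eta * n + 2 * ln d / eta * m by ring.
  lra.
have T3 : cost Cv Ce qv qe - cost Cv Ce msv mse <= Cn * (2 * eps * n + 2 * eps * m).
  apply: le_trans (cost_diff _ _ _ _ _ _) _; rewrite ler_wpM2l //.
  apply: lerD.
    rewrite /n -[2 * eps * _]sum_cst; apply: ler_sum => i _.
    apply: le_trans (_ : \sum_x (delta + eps * msv i x) <= _).
      apply: ler_sum => x _; rewrite /qv.
      have -> : (1 - eps) * msv i x + delta - msv i x = delta - eps * msv i x by ring.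
      apply: le_trans (ler_normB _ _) _; rewrite !ger0_norm // mulr_ge0 //.
    by rewrite big_split /= -mulr_sumr msv1 sum_cst /eps; lra.
  rewrite /m -[2 * eps * _]sum_cst; apply: ler_sum => e _.
  apply: le_trans (_ : \sum_x \sum_y (eps * mse e x y + (delta + ns e x) * (delta + nd e y) / eps) <= _).
    apply: ler_sum => x _; apply: ler_sum => y _; rewrite /qe.
    have -> : (1 - eps) * mse e x y + (delta + ns e x) * (delta + nd e y) / eps - mse e x y
       = (delta + ns e x) * (delta + nd e y) / eps - eps * mse e x y by ring.
    have P0 : 0 <= (delta + ns e x) * (delta + nd e y) / eps.
      rewrite divr_ge0 // mulr_ge0 //.
        by have := nsb e x; lra.
      by have := ndb e y; lra.
    apply: le_trans (ler_normB _ _) _.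
    by rewrite (ger0_norm P0) (ger0_norm (mulr_ge0 eps0 (mse0 e x y))) addrC.
  under eq_bigr do rewrite big_split /=.
  rewrite big_split /=.
  under eq_bigr do rewrite -mulr_sumr.
  rewrite -mulr_sumr mse1.
  rewrite (eq_bigr (fun x => delta + ns e x)); last by move=> x _; rewrite keyr.
  rewrite big_split /= nssum sum_cst /eps /d; lra.
have h : 0 <= (m + n) * Cn * eps by rewrite !mulr_ge0 // addr_ge0.
have -> : 16 * (m + n) * d * Cn * delta = 16 * ((m + n) * Cn * eps) by rewrite /eps; ring.
have e3 : Cn * (2 * eps * n + 2 * eps * m) = 2 * ((m + n) * Cn * eps) by ring.
rewrite e3 in T3.
lra.
Qed.
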